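(* For every nonnegative integer $L$, \[ G(L+1,L;1/2,2,2)=\sum_{j\in\mathbb{Z}}(-1)^j q^{\frac{1}{2}j(5j+3)}\begin{bmatrix}2L+1\\ L-2j\end{bmatrix} =\sum_{n\geq 0}q^{n(n+1)}\begin{bmatrix}L\\ n\end{bmatrix}. \]
   Context: $(x;q)_n=\prod_{i=0}^{n-1}(1-xq^i)$, $(q)_n=(q;q)_n$. The $q$-binomial coefficient is $\begin{bmatrix}n\\ m\end{bmatrix}=\frac{(q)_n}{(q)_m(q)_{n-m}}$ if $m$ and $n-m$ are nonnegative integers and $0$ otherwise. For integers $N,M$, a positive integer $K$ and rationals $\alpha,\beta$, $G(N,M;\alpha,\beta,K)=\sum_{j\in\mathbb{Z}}(-1)^jq^{\frac12 Kj((\alpha+\beta)j+\alpha-\beta)}\begin{bmatrix}M+N\\ N-Kj\end{bmatrix}$. *)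

(* Defs.v *)
(* Polynomials in q over rat: q = 'X. *)
From mathcomp Require Import all_boot all_order all_algebra.
Set Implicit Arguments. Unset Strict Implicit. Unset Printing Implicit Defensive.
Import Order.TTheory GRing.Theory Num.Theory.
Local Open Scope ring_scope.

Definition qpoch (n : nat) : {poly rat} := \prod_(i < n) (1 - 'X ^+ i.+1).

(* q-binomial [n, m] = (q)_n / ((q)_m (q)_{n-m}) if m, n-m >= 0, else 0.
   The quotient is exact polynomial division (the denominator divides). *)
Definition qbinom (n m : int) : {poly rat} :=
  if (0 <= m) && (0 <= n - m) then
    qpoch `|n|%N %/ (qpoch `|m|%N * qpoch `|n - m|%N)
  else 0.

(* q^e for a rational exponent e; only meaningful (and only used) when e is a
   nonnegative integer, in which case it is 'X^e. *)
Definition qpowQ (e : rat) : {poly rat} :=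
  if (denq e == 1) && (0 <= e) then 'X ^+ `|numq e|%N else 0.

(* sum over j in Z of F j, restricted to the window -B <= j <= B
   (used only when F vanishes outside the window). *)
Definition zsum (B : nat) (F : int -> {poly rat}) : {poly rat} :=
  \sum_(i < (B + B).+1) F (i%:Z - B%:Z).

(* The binomial vanishes unless 0 <= N - K j <= M + N, which (K >= 1) forces
   |j| <= |N| + |M|, so the window below contains the whole support. *)
Definition G (N M : int) (alpha beta : rat) (K : nat) : {poly rat} :=
  zsum (`|N|%N + `|M|%N) (fun j =>
    (-1) ^+ `|j|%N
    * qpowQ ((1 / 2) * K%:Q * j%:~R * ((alpha + beta) * j%:~R + alpha - beta))
    * qbinom (M + N) (N - K%:Z * j)).

(* Main.v *)
Require Import Defs.
From mathcomp Require Import all_boot all_order all_algebra zify ring lra.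
Import Order.TTheory GRing.Theory Num.Theory.
Local Open Scope ring_scope.

Fixpoint qb (n k : nat) {struct n} : {poly rat} :=
  match n, k with
  | _, 0 => 1
  | 0, _.+1 => 0
  | n'.+1, k'.+1 => qb n' k' + 'X ^+ k'.+1 * qb n' k'.+1
  end.

Lemma qb0 n : qb n 0 = 1. Proof. by case: n. Qed.
Lemma qbSS n k : qb n.+1 k.+1 = qb n k + 'X ^+ k.+1 * qb n k.+1. Proof. by []. Qed.
Lemma qb_gt n k : (n < k)%N -> qb n k = 0.
Proof.
elim: n k => [|n IH] [|k] //= h.
by rewrite !IH ?mulr0 ?addr0 // ltnW.
Qed.
Lemma qbnn n : qb n n = 1.
Proof. by elim: n => [|n IH] //=; rewrite IH qb_gt // mulr0 addr0. Qed.

Lemma qpochS n : qpoch n.+1 = qpoch n * (1 - 'X ^+ n.+1).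
Proof. by rewrite /qpoch big_ord_recr. Qed.
Lemma qpoch0 : qpoch 0 = 1. Proof. by rewrite /qpoch big_ord0. Qed.

Lemma qpoch_neq0 n : qpoch n != 0.
Proof.
elim: n => [|n IH]; first by rewrite qpoch0 oner_neq0.
rewrite qpochS mulf_neq0 //.
apply/eqP => /(congr1 (fun p : {poly rat} => p`_0)).
by rewrite coefB coef1 coefXn /= subr0 coefC /=.
Qed.

Lemma qb_prod n k : (k <= n)%N -> qb n k * (qpoch k * qpoch (n - k)) = qpoch n.
Proof.
elim: n k => [|n IH] [|k] //= hk.
- by rewrite qpoch0 !mul1r.
- by rewrite qpoch0 !mul1r subn0.
- rewrite subSS.
  have [kn|kn] := ltnP k n.
  + have e : (n - k = (n - k.+1).+1)%N by lia.
    have h1 := IH k (ltnW kn). have h2 := IH k.+1 kn.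
    transitivity ((qb n k * (qpoch k * qpoch (n - k))) * (1 - 'X ^+ k.+1)
      + 'X ^+ k.+1 * (qb n k.+1 * (qpoch k.+1 * qpoch (n - k.+1))) * (1 - 'X ^+ (n-k))).
      by rewrite e !qpochS; ring.
    rewrite h1 h2 qpochS.
    have E : ('X ^+ k.+1 * 'X ^+ (n - k) : {poly rat}) = 'X ^+ n.+1.
      by rewrite -exprD; congr ('X^_); lia.
    rewrite -E; ring.
  + have -> : k = n by lia.
    by rewrite qbnn qb_gt // subnn qpoch0 mulr0 addr0 !mul1r mulr1 qpochS.
Qed.

Lemma qb_sym n k : (k <= n)%N -> qb n (n - k) = qb n k.
Proof.
move=> hk. apply: (mulIf (qpoch_neq0 k)). apply: (mulIf (qpoch_neq0 (n - k))).
have := qb_prod _ _ (leq_subr k n). rewrite subKn // => h.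
rewrite -mulrA [qpoch k * _]mulrC h -mulrA qb_prod //.
Qed.

Lemma qbSS' n k : qb n.+1 k.+1 = 'X ^+ (n - k) * qb n k + qb n k.+1.
Proof.
have [kn|kn] := ltnP k n.
- have s1 : qb n.+1 k.+1 = qb n.+1 (n - k) by rewrite -(qb_sym n.+1 k.+1) ?subSS //; apply: ltnW.
  have e : (n - k = (n - k.+1).+1)%N by lia.
  rewrite s1 e qbSS -e (qb_sym n k.+1 kn) (qb_sym n k (ltnW kn)).
  by rewrite addrC.
- have [->|kn'] := eqVneq k n.
  + by rewrite !qbnn subnn expr0 mul1r qb_gt // addr0.
  + rewrite !qb_gt //; try lia. by rewrite mulr0 addr0.
Qed.

Definition qbz (n k : int) : {poly rat} :=
  match n, k with Posz n', Posz k' => qb n' k' | _, _ => 0 end.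

Lemma qbinomE n k : qbinom n k = qbz n k.
Proof.
rewrite /qbinom /qbz.
case: n => [n|n]; case: k => [k|k] //=.
- case: ifP => h.
  + have hk : (k <= n)%N by lia.
    have -> : absz (n%:Z - k%:Z) = (n - k)%N by lia.
    by rewrite -(qb_prod _ _ hk) mulpK // mulf_neq0 // qpoch_neq0.
  + rewrite qb_gt //. lia.
- case: ifP => // h. lia.
Qed.

Definition xz (z : int) : {poly rat} := 'X ^+ absz z.

Lemma xzD a b : 0 <= a -> 0 <= b -> xz (a + b) = xz a * xz b.
Proof. move=> ha hb; rewrite /xz -exprD; congr ('X ^+ _); lia. Qed.

Lemma xz0 : xz 0 = 1. Proof. by rewrite /xz expr0. Qed.

Lemma qbz_out n k : (k < 0) || (n < k) -> qbz n k = 0.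
Proof.
case: n => [n|n]; case: k => [k|k] //= h.
rewrite qb_gt //; lia.
Qed.

Lemma qbz_supp n k : qbz n k != 0 -> 0 <= k /\ k <= n.
Proof.
move=> h; case: (boolP ((k < 0) || (n < k))) => [/qbz_out|] e.
- by rewrite e eqxx in h.
- lia.
Qed.

Lemma qbzN (a b : nat) : qbz a%:Z b%:Z = qb a b. Proof. by []. Qed.

Lemma pascal1z n k : 1 <= n -> qbz n k = qbz (n - 1) (k - 1) + xz k * qbz (n - 1) k.
Proof.
move=> hn.
have [n' ->] : exists n' : nat, n = n'.+1%:Z by exists (absz n).-1; lia.
have -> : n'.+1%:Z - 1 = n'%:Z by lia.
case: (boolP (k < 0)) => hk.
- by rewrite !qbz_out ?mulr0 ?addr0 //; apply/orP; left; lia.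
case: (boolP (k == 0)) => [/eqP ->|hk0].
- rewrite (qbz_out n'%:Z (0 - 1)); last by apply/orP; left; lia.
  by rewrite xz0 mul1r add0r /qbz /= !qb0.
have [k' ->] : exists k' : nat, k = k'.+1%:Z by exists (absz k).-1; lia.
have -> : k'.+1%:Z - 1 = k'%:Z by lia.
by rewrite !qbzN qbSS.
Qed.

Lemma symz n k : qbz n k = qbz n (n - k).
Proof.
case: (boolP ((k < 0) || (n < k))) => h.
- rewrite !qbz_out //. lia.
have [n' en] : exists n' : nat, n = n'%:Z by exists (absz n); lia.
have [k' ek] : exists k' : nat, k = k'%:Z by exists (absz k); lia.
subst n k.
have hk : (k' <= n')%N by lia.
have -> : n'%:Z - k'%:Z = (n' - k')%N%:Z by lia.
by rewrite !qbzN qb_sym.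
Qed.

Lemma pascal2z n k : 1 <= n -> qbz n k = xz (n - k) * qbz (n - 1) (k - 1) + qbz (n - 1) k.
Proof.
move=> hn.
rewrite symz pascal1z //.
rewrite [qbz (n-1) (n-k-1)]symz [qbz (n-1) (n-k)]symz.
have -> : n - 1 - (n - k - 1) = k by lia.
have -> : n - 1 - (n - k) = k - 1 by lia.
by rewrite addrC.
Qed.

Lemma zsum_ext W f g : (forall j, f j = g j) -> zsum W f = zsum W g.
Proof. by move=> h; apply: eq_bigr => i _; apply: h. Qed.

Lemma zsumD W f g : zsum W (fun j => f j + g j) = zsum W f + zsum W g.
Proof. by rewrite /zsum big_split. Qed.

Lemma zsumZ W c f : zsum W (fun j => c * f j) = c * zsum W f.
Proof. by rewrite /zsum mulr_sumr. Qed.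

Lemma zsumN W f : zsum W (fun j => - f j) = - zsum W f.
Proof. by rewrite /zsum sumrN. Qed.

Lemma zsum_neg W f : zsum W (fun j => f (- j)) = zsum W f.
Proof.
rewrite /zsum (reindex_inj rev_ord_inj) /=; apply: eq_bigr => i _.
congr f; have := ltn_ord i; lia.
Qed.

Lemma zsum_shift W f : zsum W (fun j => f (j + 1)) = zsum W f - f (- W%:Z) + f (W%:Z + 1).
Proof.
rewrite /zsum big_ord_recr big_ord_recl /=.
have -> : ((W + W)%N%:Z - W%:Z + 1) = W%:Z + 1 by lia.
have -> : ((0%N)%:Z - W%:Z) = - W%:Z by lia.
rewrite [f (- W%:Z) + _]addrC addrK; congr (_ + _).
by apply: eq_bigr => i _; congr f; rewrite /bump /=; lia.
Qed.

Lemma zsumS W f : zsum W.+1 f = f (- W.+1%:Z) + zsum W f + f (W.+1%:Z).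
Proof.
rewrite /zsum.
have -> : (W.+1 + W.+1).+1 = (W + W).+2.+1 by lia.
rewrite big_ord_recl big_ord_recr /=.
have -> : ((0%N)%:Z - W.+1%:Z) = - W.+1%:Z by lia.
have -> : ((W + W).+2%N%:Z - W.+1%:Z) = W.+1%:Z by lia.
rewrite addrA; congr (_ + _ + _); apply: eq_bigr => i _; congr f; rewrite /bump /=; lia.
Qed.

Lemma zsum_win B k f : (forall j, (B < absz j)%N -> f j = 0) -> zsum (B + k) f = zsum B f.
Proof.
move=> h; elim: k => [|k IH]; first by rewrite addn0.
rewrite addnS zsumS IH !h ?addr0 ?add0r //; lia.
Qed.

Lemma zsum_refl W f : zsum W (fun j => f (- 1 - j)) = zsum W f - f (W%:Z) + f (- W%:Z - 1).
Proof.
have e := zsum_shift W (fun j => f (- j)).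
rewrite zsum_neg opprK in e.
have -> : f (- W%:Z - 1) = f (- (W%:Z + 1)) by congr f; lia.
rewrite -e; apply: zsum_ext => j; congr f; lia.
Qed.

Definition sg (j : int) : {poly rat} := (-1) ^+ absz j.
Lemma sgN j : sg (- j) = sg j. Proof. by rewrite /sg abszN. Qed.
Lemma sgR j : sg (- 1 - j) = - sg j.
Proof.
rewrite /sg; case: (boolP (0 <= j)) => h.
- have -> : absz (- 1 - j)%R = (absz j).+1 by lia.
  by rewrite exprS mulN1r.
- have -> : absz j = (absz (- 1 - j)%R).+1 by lia.
  by rewrite exprS mulN1r opprK.
Qed.

Definition ex (c j : int) : int := ((j * (5 * j + c)) %/ 2)%Z.

Lemma exE d j : ex (2 * d + 1) j * 2 = j * (5 * j + (2 * d + 1)).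
Proof.
rewrite /ex.
have := divz_eq j 2. have := modz_ge0 j (isT : (2:int) != 0). have := ltz_pmod j (isT: (0:int) < 2).
set r := (j %% 2)%Z; set m := (j %/ 2)%Z => h1 h2 e.
have [k ->] : exists k, j * (5 * j + (2 * d + 1)) = k * 2.
  have [r0|r1] : r = 0 \/ r = 1 by lia.
  - exists (m * (5 * j + (2 * d + 1))). rewrite e r0. ring.
  - exists (j * (5 * m + 3 + d)). rewrite [in 5 * j]e r1. ring.
by rewrite mulzK.
Qed.

Lemma ex_ge0 (d j : int) : -3 <= d <= 2 -> 0 <= ex (2 * d + 1) j.
Proof.
move=> hd; have := exE d j.
case: (boolP (1 <= j)) => h1.
  have h2 : 0 <= 5 * j + (2 * d + 1) by lia.
  have h3 : 0 <= j * (5 * j + (2 * d + 1)) by apply: mulr_ge0; lia.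
  move=> e; rewrite -e in h3; move: h3; generalize (ex (2 * d + 1) j) => x; lia.
case: (boolP (j == 0)) => [/eqP -> | h0]; first lia.
have h2 : 5 * j + (2 * d + 1) <= 0 by lia.
have h3 : 0 <= j * (5 * j + (2 * d + 1)) by apply: mulr_le0; lia.
move=> e; rewrite -e in h3; move: h3; generalize (ex (2 * d + 1) j) => x; lia.
Qed.

Lemma qpowQ_int (z : int) : 0 <= z -> qpowQ (z%:~R) = xz z.
Proof.
move=> hz; rewrite /qpowQ denq_int numq_int eqxx ler0z hz /=.
by [].
Qed.

Definition Dn (a L : nat) : {poly rat} := \sum_(n < L.+1) 'X ^+ (n * n + a * n) * qb L n.

Lemma Dn_split a L :
  Dn a L = 1 + \sum_(m < L.+1) 'X ^+ (m.+1 * m.+1 + a * m.+1) * qb L m.+1.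
Proof.
rewrite /Dn big_ord_recl [in RHS]big_ord_recr /= (qb_gt L L.+1) // mulr0 addr0 qb0.
by rewrite !muln0 expr0 mulr1.
Qed.

Lemma Dn_R1 a L : Dn a L.+1 = Dn a L + 'X ^+ (L.+1 + a) * Dn a.+1 L.
Proof.
rewrite [LHS]Dn_split [in Dn a L]Dn_split.
under eq_bigr => m _ do rewrite qbSS' mulrDr.
have z1 : qb L L.+1 = 0 by rewrite qb_gt.
have z2 : qb L L.+2 = 0 by rewrite qb_gt.
rewrite big_split /= [X in 1 + (X + _)]big_ord_recr [X in 1 + (_ + X)]big_ord_recr /= z1 z2 !mulr0 !addr0.
rewrite [X in 1 + X]addrC addrA; congr (_ + _).
rewrite /Dn mulr_sumr; apply: eq_bigr => m _.
rewrite mulrA [RHS]mulrA -!exprD; congr (_ * _); congr (_ ^+ _).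
have := ltn_ord m; nia.
Qed.

Lemma Dn_R2 a L : Dn a L.+1 = Dn a.+1 L + 'X ^+ a.+1 * Dn a.+2 L.
Proof.
rewrite [LHS]Dn_split [in Dn a.+1 L]Dn_split.
under eq_bigr => m _ do rewrite qbSS mulrDr.
have z1 : qb L L.+1 = 0 by rewrite qb_gt.
have z2 : qb L L.+2 = 0 by rewrite qb_gt.
rewrite big_split /= [X in 1 + (X + _)]big_ord_recr [X in 1 + (_ + X)]big_ord_recr /= z1 z2 !mulr0 !addr0.
rewrite [X in 1 + X]addrC addrA; congr (_ + _).
- congr (_ + _); apply: eq_bigr => m _.
  rewrite mulrA -!exprD; congr (_ * _); congr (_ ^+ _); nia.
- rewrite /Dn mulr_sumr; apply: eq_bigr => m _.
  rewrite mulrA -!exprD; congr (_ * _); congr (_ ^+ _); nia.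
Qed.

Lemma D0S L : Dn 0 L.+1 = Dn 0 L + 'X ^+ L.+1 * Dn 1 L.
Proof. by rewrite Dn_R1 addn0. Qed.

Lemma D1S L : Dn 1 L.+1 = 'X ^+ L.+1 * Dn 0 L + (1 - 'X ^+ L.+1 + 'X ^+ L.+1 * 'X ^+ L.+1) * Dn 1 L.
Proof.
have h1 := Dn_R1 1 L. have h2 := Dn_R2 0 L. have h3 := Dn_R1 0 L.
rewrite addn0 in h3.
have e : 'X ^+ (L.+1 + 1) = 'X ^+ L.+1 * 'X ^+ 1 :> {poly rat} by rewrite exprD.
rewrite e in h1.
have h4 : 'X ^+ L.+1 * Dn 0 L.+1 = 'X ^+ L.+1 * Dn 1 L + (Dn 1 L.+1 - Dn 1 L).
  rewrite h2 h1; ring.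
have h5 : Dn 1 L.+1 = 'X ^+ L.+1 * Dn 0 L.+1 - 'X ^+ L.+1 * Dn 1 L + Dn 1 L.
  rewrite h4; ring.
rewrite h5 h3; ring.
Qed.

Lemma xz_comb a b c d : 0 <= a -> 0 <= b -> 0 <= c -> 0 <= d -> a + b = c + d ->
  xz a * xz b = xz c * xz d.
Proof. by move=> ha hb hc hd e; rewrite -!xzD // e. Qed.

Lemma exI (c d j : int) : c = 2 * d + 1 -> ex c j * 2 = j * (5 * j + c).
Proof. by move=> ->; apply: exE. Qed.
Lemma exP (c d j : int) : c = 2 * d + 1 -> -3 <= d <= 2 -> 0 <= ex c j.
Proof. by move=> ->; apply: ex_ge0. Qed.

Lemma ex1 j : ex 1 j * 2 = j * (5 * j + 1). Proof. by apply: (exI 1 0). Qed.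
Lemma ex3 j : ex 3 j * 2 = j * (5 * j + 3). Proof. by apply: (exI 3 1). Qed.
Lemma ex1p j : 0 <= ex 1 j. Proof. by apply: (exP 1 0). Qed.
Lemma ex3p j : 0 <= ex 3 j. Proof. by apply: (exP 3 1). Qed.

Definition Pt (L : nat) j := sg j * xz (ex 1 j) * qbz (2 * L%:Z) (L%:Z - 2 * j).
Definition Qt (L : nat) j := sg j * xz (ex 3 j) * qbz (2 * L%:Z + 1) (L%:Z - 2 * j).

Lemma supp_gen (a : int -> {poly rat}) (n m : int) B :
  (forall j, 0 <= m - 2 * j -> m - 2 * j <= n -> (absz j <= B)%N) ->
  forall j, (B < absz j)%N -> a j * qbz n (m - 2 * j) = 0.
Proof.
move=> H j hj; case: (eqVneq (qbz n (m - 2 * j)) 0) => [->|h]; first by rewrite mulr0.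
have [h1 h2] := qbz_supp _ _ h; have := H j h1 h2; lia.
Qed.

Lemma stepA1 L j : Pt L.+1 j =
  sg j * xz (ex 1 j) * qbz (2 * L%:Z + 1) (L%:Z - 2 * j) + xz (L%:Z + 1) * Qt L (- j).
Proof.
rewrite /Pt /Qt pascal1z; last lia.
have -> : 2 * L.+1%:Z - 1 = 2 * L%:Z + 1 by lia.
have -> : L.+1%:Z - 2 * j - 1 = L%:Z - 2 * j by lia.
rewrite mulrDr; congr (_ + _).
rewrite sgN (symz (2 * L%:Z + 1) (L.+1%:Z - 2 * j)).
have -> : 2 * L%:Z + 1 - (L.+1%:Z - 2 * j) = L%:Z - 2 * (- j) by lia.
case: (eqVneq (qbz (2 * L%:Z + 1) (L%:Z - 2 * - j)) 0) => [->|hq]; first by rewrite !mulr0.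
have [h1 h2] := qbz_supp _ _ hq.
have e : xz (ex 1 j) * xz (L.+1%:Z - 2 * j) = xz (L%:Z + 1) * xz (ex 3 (- j)).
  have := ex1 j; have := ex3 (- j); have := ex1p j; have := ex3p (- j).
  move=> *; apply: xz_comb; lia.
transitivity (sg j * (xz (ex 1 j) * xz (L.+1%:Z - 2 * j)) * qbz (2 * L%:Z + 1) (L%:Z - 2 * - j)).
  by ring.
by rewrite e; ring.
Qed.

Definition Zt (L : nat) j :=
  sg j * xz (ex 1 j) * (xz (L%:Z + 1 + 2 * j) * qbz (2 * L%:Z) (L%:Z - 1 - 2 * j)).

Lemma stepA2 L j : sg j * xz (ex 1 j) * qbz (2 * L%:Z + 1) (L%:Z - 2 * j) = Pt L j + Zt L j.
Proof.
rewrite /Pt /Zt pascal2z; last lia.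
have -> : 2 * L%:Z + 1 - (L%:Z - 2 * j) = L%:Z + 1 + 2 * j by lia.
have -> : 2 * L%:Z + 1 - 1 = 2 * L%:Z by lia.
have -> : L%:Z - 2 * j - 1 = L%:Z - 1 - 2 * j by lia.
by rewrite mulrDr addrC.
Qed.

Lemma Zrefl L j : Zt L (- 1 - j) = - Zt L j.
Proof.
rewrite /Zt sgR (symz (2 * L%:Z) (L%:Z - 1 - 2 * (- 1 - j))).
have -> : 2 * L%:Z - (L%:Z - 1 - 2 * (- 1 - j)) = L%:Z - 1 - 2 * j by lia.
case: (eqVneq (qbz (2 * L%:Z) (L%:Z - 1 - 2 * j)) 0) => [->|hq]; first by rewrite !mulr0 oppr0.
have [h1 h2] := qbz_supp _ _ hq.
have e : xz (ex 1 (- 1 - j)) * xz (L%:Z + 1 + 2 * (- 1 - j)) = xz (ex 1 j) * xz (L%:Z + 1 + 2 * j).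
  have := ex1 j; have := ex1 (- 1 - j); have := ex1p j; have := ex1p (- 1 - j).
  move=> *; apply: xz_comb; lia.
transitivity (- (sg j * (xz (ex 1 (- 1 - j)) * xz (L%:Z + 1 + 2 * (- 1 - j))) * qbz (2 * L%:Z) (L%:Z - 1 - 2 * j))).
  by ring.
by rewrite e; ring.
Qed.

Lemma poly_half (p : {poly rat}) : - p = p -> p = 0.
Proof.
move=> e; apply/polyP => i; have := congr1 (fun q : {poly rat} => q`_i) e.
rewrite coefN coef0 => h; lra.
Qed.

Definition PP L := zsum L.+1 (Pt L).
Definition QQ L := zsum L.+1 (Qt L).

Lemma PP_win L : zsum L.+1 (Pt L.+1) = PP L.+1.
Proof.
rewrite /PP -(zsum_win L.+1 1 (Pt L.+1)) ?addn1 // => j hj; rewrite /Pt.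
apply: (supp_gen (fun j => sg j * xz (ex 1 j)) _ _ L.+1) => // k h1 h2; lia.
Qed.

Lemma QQ_win L : zsum L.+1 (Qt L.+1) = QQ L.+1.
Proof.
rewrite /QQ -(zsum_win L.+1 1 (Qt L.+1)) ?addn1 // => j hj; rewrite /Qt.
apply: (supp_gen (fun j => sg j * xz (ex 3 j)) _ _ L.+1) => // k h1 h2; lia.
Qed.

Lemma ZZ0 L : zsum L.+1 (Zt L) = 0.
Proof.
apply: poly_half.
have := zsum_refl L.+1 (Zt L).
rewrite (zsum_ext _ _ _ (Zrefl L)) zsumN => ->.
rewrite /Zt !qbz_out ?mulr0 ?subr0 ?addr0 //; apply/orP; lia.
Qed.

Lemma stepA L : PP L.+1 = PP L + xz (L%:Z + 1) * QQ L.
Proof.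
rewrite -PP_win (zsum_ext _ _ _ (stepA1 L)) zsumD zsumZ.
rewrite (zsum_ext _ _ _ (stepA2 L)) zsumD ZZ0 addr0.
congr (_ + _ * _); rewrite /QQ -[RHS]zsum_neg //.
Qed.

Definition R1t (L : nat) j := sg j * xz (ex 3 j) * qbz (2 * L%:Z + 2) (L%:Z - 2 * j).
Definition Ut (L : nat) j :=
  sg j * xz (ex 3 j) * (xz (L%:Z + 2 + 2 * j) * qbz (2 * L%:Z + 1) (L%:Z - 1 - 2 * j)).

Lemma stepB1 L j : Qt L.+1 j = R1t L j + xz (L%:Z + 1) * Pt L.+1 (- j).
Proof.
rewrite /Qt /R1t /Pt pascal1z; last lia.
have -> : 2 * L.+1%:Z + 1 - 1 = 2 * L%:Z + 2 by lia.
have -> : L.+1%:Z - 2 * j - 1 = L%:Z - 2 * j by lia.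
rewrite mulrDr; congr (_ + _).
rewrite sgN (symz (2 * L%:Z + 2) (L.+1%:Z - 2 * j)).
have -> : 2 * L%:Z + 2 - (L.+1%:Z - 2 * j) = L.+1%:Z - 2 * (- j) by lia.
have -> : 2 * L.+1%:Z = 2 * L%:Z + 2 by lia.
case: (eqVneq (qbz (2 * L%:Z + 2) (L.+1%:Z - 2 * - j)) 0) => [->|hq]; first by rewrite !mulr0.
have [h1 h2] := qbz_supp _ _ hq.
have e : xz (ex 3 j) * xz (L.+1%:Z - 2 * j) = xz (L%:Z + 1) * xz (ex 1 (- j)).
  have := ex3 j; have := ex1 (- j); have := ex3p j; have := ex1p (- j).
  move=> *; apply: xz_comb; lia.
transitivity (sg j * (xz (ex 3 j) * xz (L.+1%:Z - 2 * j)) * qbz (2 * L%:Z + 2) (L.+1%:Z - 2 * - j)).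
  by ring.
by rewrite e; ring.
Qed.

Lemma stepB2 L j : R1t L j = Qt L j + Ut L j.
Proof.
rewrite /R1t /Qt /Ut pascal2z; last lia.
have -> : 2 * L%:Z + 2 - (L%:Z - 2 * j) = L%:Z + 2 + 2 * j by lia.
have -> : 2 * L%:Z + 2 - 1 = 2 * L%:Z + 1 by lia.
have -> : L%:Z - 2 * j - 1 = L%:Z - 1 - 2 * j by lia.
by rewrite mulrDr addrC.
Qed.

Lemma Urefl L j : Ut L (- 1 - j) = - (xz (L%:Z + 1) * Qt L j).
Proof.
rewrite /Ut /Qt sgR (symz (2 * L%:Z + 1) (L%:Z - 1 - 2 * (- 1 - j))).
have -> : 2 * L%:Z + 1 - (L%:Z - 1 - 2 * (- 1 - j)) = L%:Z - 2 * j by lia.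
case: (eqVneq (qbz (2 * L%:Z + 1) (L%:Z - 2 * j)) 0) => [->|hq]; first by rewrite !mulr0 oppr0.
have [h1 h2] := qbz_supp _ _ hq.
have e : xz (ex 3 (- 1 - j)) * xz (L%:Z + 2 + 2 * (- 1 - j)) = xz (L%:Z + 1) * xz (ex 3 j).
  have := ex3 j; have := ex3 (- 1 - j); have := ex3p j; have := ex3p (- 1 - j).
  move=> *; apply: xz_comb; lia.
transitivity (- (sg j * (xz (ex 3 (- 1 - j)) * xz (L%:Z + 2 + 2 * (- 1 - j))) * qbz (2 * L%:Z + 1) (L%:Z - 2 * j))).
  by ring.
by rewrite e; ring.
Qed.

Lemma UU L : zsum L.+1 (Ut L) = - (xz (L%:Z + 1) * QQ L).
Proof.
have := zsum_refl L.+1 (Ut L).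
rewrite (zsum_ext _ _ _ (Urefl L)) zsumN zsumZ -/(QQ L) => ->.
rewrite /Ut !qbz_out ?mulr0 ?subr0 ?addr0 //; apply/orP; lia.
Qed.

Lemma stepB L : QQ L.+1 =
  xz (L%:Z + 1) * PP L + (1 - xz (L%:Z + 1) + xz (L%:Z + 1) * xz (L%:Z + 1)) * QQ L.
Proof.
rewrite -QQ_win (zsum_ext _ _ _ (stepB1 L)) zsumD zsumZ.
rewrite (zsum_ext _ _ _ (stepB2 L)) zsumD UU zsum_neg PP_win stepA -/(QQ L).
ring.
Qed.

Lemma xzL L : xz (L%:Z + 1) = 'X ^+ L.+1.
Proof. by rewrite /xz; congr ('X ^+ _); lia. Qed.

Lemma zsum1 f : zsum 1 f = f (-1) + f 0 + f 1.
Proof. by rewrite zsumS /zsum big_ord1. Qed.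

Lemma PQD L : PP L = Dn 0 L /\ QQ L = Dn 1 L.
Proof.
elim: L => [|L [IHP IHQ]].
- have z1 : forall j, j != 0 -> (j <= 1) && (- 1 <= j) -> Pt 0 j = 0.
    move=> j h1 h2; rewrite /Pt qbz_out ?mulr0 //; apply/orP; lia.
  have z2 : forall j, j != 0 -> (j <= 1) && (- 1 <= j) -> Qt 0 j = 0.
    move=> j h1 h2; rewrite /Qt qbz_out ?mulr0 //; apply/orP; lia.
  have e1 : ex 1 0 = 0 by [].
  have e3 : ex 3 0 = 0 by [].
  rewrite /PP /QQ !zsum1 (z1 (-1)) ?(z1 1) ?(z2 (-1)) ?(z2 1) //.
  rewrite !add0r !addr0 /Pt /Qt /Dn !big_ord1 e1 /sg /xz /=.
  by rewrite !muln0 !addn0 !expr0 !mulr1.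
- rewrite stepA stepB D0S D1S IHP IHQ xzL; split => //.
Qed.

Lemma qpow3 j : qpowQ (j%:~R * (5 * j%:~R + 3) / 2) = xz (ex 3 j).
Proof.
rewrite -qpowQ_int ?ex3p //; congr qpowQ.
have h := ex3 j.
have h' : ((ex 3 j * 2)%:~R : rat) = (j * (5 * j + 3))%:~R by rewrite h.
have e1 : ((ex 3 j * 2)%:~R : rat) = (ex 3 j)%:~R * 2 by ring.
have e2 : ((j * (5 * j + 3))%:~R : rat) = j%:~R * (5 * j%:~R + 3) by ring.
rewrite e1 e2 in h'. by rewrite -h' mulfK.
Qed.

Lemma qpowG j : qpowQ ((1 / 2) * (2%N)%:Q * j%:~R * ((1 / 2 + 2) * j%:~R + 1 / 2 - 2)) = xz (ex 3 (- j)).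
Proof.
rewrite -qpowQ_int ?ex3p //; congr qpowQ.
have h := ex3 (- j).
have h' : ((ex 3 (- j) * 2)%:~R : rat) = ((- j) * (5 * (- j) + 3))%:~R by rewrite h.
have e1 : ((ex 3 (- j) * 2)%:~R : rat) = (ex 3 (- j))%:~R * 2 by ring.
have e2 : (((- j) * (5 * (- j) + 3))%:~R : rat) = (- j%:~R) * (5 * (- j%:~R) + 3) by ring.
rewrite e1 e2 in h'.
have -> : ((ex 3 (- j))%:~R : rat) = (- j%:~R) * (5 * (- j%:~R) + 3) / 2 by rewrite -h' mulfK.
by field.
Qed.

Theorem mainTheorem7 (L : nat) :
  G (L.+1)%:Z L%:Z (1 / 2) 2 2 =
    zsum (L.+1) (fun j =>
      (-1) ^+ `|j|%N * qpowQ (j%:~R * (5 * j%:~R + 3) / 2)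
      * qbinom (2 * L%:Z + 1) (L%:Z - 2 * j))
  /\
  zsum (L.+1) (fun j =>
      (-1) ^+ `|j|%N * qpowQ (j%:~R * (5 * j%:~R + 3) / 2)
      * qbinom (2 * L%:Z + 1) (L%:Z - 2 * j))
  = \sum_(n < L.+1) 'X ^+ (n * n.+1) * qbinom L%:Z n%:Z.
Proof.
have hQ : zsum L.+1 (fun j => (-1) ^+ `|j|%N * qpowQ (j%:~R * (5 * j%:~R + 3) / 2)
      * qbinom (2 * L%:Z + 1) (L%:Z - 2 * j)) = QQ L.
  by apply: zsum_ext => j; rewrite qpow3 qbinomE.
rewrite hQ; split.
- rewrite /G.
  have -> : (absz (L.+1)%:Z + absz L%:Z)%N = (L.+1 + L)%N by [].
  rewrite /QQ -(zsum_win L.+1 L (Qt L)); last first.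
    move=> j hj; rewrite /Qt.
    apply: (supp_gen (fun j => sg j * xz (ex 3 j)) _ _ L.+1) => // k h1 h2; lia.
  rewrite -zsum_neg; apply: zsum_ext => j.
  rewrite /Qt qbinomE symz (qpowG (- j)) opprK abszN.
  have -> : L%:Z + L.+1%:Z = 2 * L%:Z + 1 by lia.
  have -> : 2 * L%:Z + 1 - (L.+1%:Z - 2%N%:Z * - j) = L%:Z - 2 * j by lia.
  by [].
- rewrite (proj2 (PQD L)) /Dn; apply: eq_bigr => n _.
  rewrite qbinomE qbzN; congr (_ * _); congr (_ ^+ _); nia.
Qed.
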